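(* Let $\mathcal X\subseteq\mathbb R^d$ be open, let $\phi\in C^3(\mathbb R^d)$ be such that $k(x,y)=\phi(x-y)$ is a positive definite scalar kernel (so $\phi$ is even), and let $\mathcal K_{\mathrm{cf}}(x,y):=-\nabla^2\phi(x-y)$ (the curl-free kernel). Let $x^1,\dots,x^M\in\mathcal X$ and $\lambda>0$. Define the KEF estimator $$\hat f_{p,\lambda}(y)=\sum_{m=1}^M\sum_{j=1}^dc_{(m-1)d+j}\,\partial_jk(x^m,y)-\frac{\hat\xi(y)}{\lambda},\qquad \hat\xi(y)=\frac1M\sum_{m=1}^M\sum_{j=1}^d\partial_j^2k(x^m,y),$$ where $\partial_j$ denotes differentiation with respect to the $j$-th coordinate of the first argument and $\mathbf c\in\mathbb R^{Md}$ solves $(\mathbf G+M\lambda I)\mathbf c=\mathbf b/\lambda$ with $\mathbf G_{(m-1)d+i,(\ell-1)d+j}=\partial_i\partial_{j+d}k(x^m,x^\ell)$ and $\mathbf b_{(m-1)d+i}=\frac1M\sum_{\ell=1}^M\sum_{j=1}^d\partial_i\partial^2_{j+d}k(x^m,x^\ell)$ ($\partial_{j+d}$ differentiates with respect to the $j$-th coordinate of the second argument). Then the Tikhonov-regularized estimator with kernel $\mathcal K_{\mathrm{cf}}$, $\hat s^g_{p,\lambda}=-(\hat L_{\mathcal K_{\mathrm{cf}}}+\lambda I)^{-1}\hat\zeta$, satisfies $\hat s^g_{p,\lambda}=\nabla\hat f_{p,\lambda}$ on $\mathcal X$.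
   Context: For a matrix-valued positive definite kernel $\mathcal K$ with RKHS $\mathcal H$ (where $\mathcal K_xc$ denotes $y\mapsto\mathcal K(y,x)c$ and $\langle f,\mathcal K_xc\rangle_{\mathcal H}=f(x)^\top c$): $\hat L_{\mathcal K}f=\frac1M\sum_m\mathcal K_{x^m}f(x^m)$, and $\hat\zeta$ is the function $\hat\zeta(y)_i=\frac1M\sum_m\sum_{j=1}^d\frac{\partial}{\partial x_j}[\mathcal K(y,x)_{ij}]|_{x=x^m}$. $\nabla^2\phi$ is the Hessian of $\phi$. *)

(* Defs.v *)
From HB Require Import structures.
From mathcomp Require Import all_boot all_order all_algebra.
From mathcomp Require Import all_classical all_reals all_analysis.
Set Implicit Arguments. Unset Strict Implicit. Unset Printing Implicit Defensive.
Import Order.TTheory GRing.Theory Num.Theory.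
Import numFieldNormedType.Exports.
Local Open Scope classical_set_scope.
Local Open Scope ring_scope.

Section Defs.
Variable R : realType.
Variable d : nat.
Local Notation V := 'rV[R]_d.

Definition evec (j : 'I_d) : V := delta_mx 0 j.

Definition pd (j : 'I_d) (f : V -> R) : V -> R := 'D_(evec j) f.

Definition grad (f : V -> R) (y : V) : V := \row_i pd i f y.
Definition hess (f : V -> R) (z : V) : 'M[R]_d := \matrix_(i, j) pd i (pd j f) z.

Definition C3 (phi : V -> R) : Prop :=
  forall (i j l : 'I_d) (x : V),
    [/\ differentiable phi x, differentiable (pd i phi) x,
        differentiable (pd j (pd i phi)) x &
        {for x, continuous (pd l (pd j (pd i phi)))}].

Definition pd_kernel (k : V -> V -> R) : Prop :=
  (forall x y, k x y = k y x) /\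
  forall (n : nat) (pts : 'I_n -> V) (a : 'I_n -> R),
    0 <= \sum_(i < n) \sum_(j < n) a i * a j * k (pts i) (pts j).

Definition tkernel (phi : V -> R) : V -> V -> R := fun x y => phi (x - y).

Definition Kcf (phi : V -> R) (x y : V) : 'M[R]_d := - hess phi (x - y).

(* derivatives of a two-argument kernel k:
   d1 j k x y = partial_j k (x,y)   (j-th coordinate of the first argument)
   d2 j k x y = partial_{j+d} k (x,y) (j-th coordinate of the second argument) *)
Definition d1 (j : 'I_d) (k : V -> V -> R) : V -> V -> R :=
  fun x y => pd j (fun x' => k x' y) x.
Definition d2 (j : 'I_d) (k : V -> V -> R) : V -> V -> R :=
  fun x y => pd j (fun y' => k x y') y.

(* matrix acting on a (row-represented) vector: A c *)
Definition mxapp (A : 'M[R]_d) (c : V) : V := c *m A^T.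
Definition dotv (u v : V) : R := (u *m v^T) 0 0.

(* A (real) Hilbert space H of functions T -> R^d, with inner product ip,
   which is a reproducing kernel Hilbert space for the matrix-valued kernel K:
   K_x c := (y |-> K(y,x) c) belongs to H and <f, K_x c> = f(x)^T c. *)
Definition is_vRKHS (T : Type) (K : T -> T -> 'M[R]_d)
    (H : set (T -> V)) (ip : (T -> V) -> (T -> V) -> R) : Prop :=
  H (fun _ => 0) /\
      (forall f g, H f -> H g -> H (fun y => f y + g y)) /\
      (forall (a : R) f, H f -> H (fun y => a *: f y)) /\
      (forall f g, H f -> H g -> ip f g = ip g f) /\
      (forall (a : R) f g h, H f -> H g -> H h ->
          ip (fun y => a *: f y + g y) h = a * ip f h + ip g h) /\
      (forall f, H f -> 0 <= ip f f) /\
      (forall f, H f -> ip f f = 0 -> f = (fun _ => 0)) /\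
      (forall u : nat -> T -> V, (forall n, H (u n)) ->
         (forall e : R, 0 < e -> exists N : nat, forall n m : nat, (N <= n)%N -> (N <= m)%N ->
              ip (fun y => u n y - u m y) (fun y => u n y - u m y) < e) ->
         exists f, H f /\ forall e : R, 0 < e -> exists N : nat, forall n : nat, (N <= n)%N ->
              ip (fun y => u n y - f y) (fun y => u n y - f y) < e) /\
      (forall x c, H (fun y => mxapp (K y x) c)) /\
      (forall f x c, H f -> ip f (fun y => mxapp (K y x) c) = dotv (f x) c).

Definition Lhat (T : Type) (M : nat) (K : T -> T -> 'M[R]_d) (xs : 'I_M -> T)
    (f : T -> V) : T -> V :=
  fun y => (M%:R)^-1 *: \sum_(m < M) mxapp (K y (xs m)) (f (xs m)).

Definition zetahat (M : nat) (K : V -> V -> 'M[R]_d) (xs : 'I_M -> V) (y : V) : V :=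
  \row_i ((M%:R)^-1 * \sum_(m < M) \sum_(j < d) pd j (fun x => K y x i j) (xs m)).

(* decoding an index p in {0..Md-1} as the pair (m, i), p = m d + i *)
Definition decode (M : nat) (p : 'I_(M * d)) : 'I_M * 'I_d :=
  enum_val (cast_ord (esym (@mxvec_cast M d)) p).

Definition Gmat (M : nat) (k : V -> V -> R) (xs : 'I_M -> V) : 'M[R]_(M * d) :=
  \matrix_(p, q) d1 (decode p).2 (d2 (decode q).2 k)
                   (xs (decode p).1) (xs (decode q).1).

Definition bvec (M : nat) (k : V -> V -> R) (xs : 'I_M -> V) : 'cV[R]_(M * d) :=
  \col_p ((M%:R)^-1 * \sum_(l < M) \sum_(j < d)
            d1 (decode p).2 (d2 j (d2 j k)) (xs (decode p).1) (xs l)).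

Definition xihat (M : nat) (k : V -> V -> R) (xs : 'I_M -> V) (y : V) : R :=
  (M%:R)^-1 * \sum_(m < M) \sum_(j < d) d1 j (d1 j k) (xs m) y.

Definition fhat (M : nat) (k : V -> V -> R) (xs : 'I_M -> V) (lam : R)
    (c : 'cV[R]_(M * d)) (y : V) : R :=
  \sum_(m < M) \sum_(j < d) c (mxvec_index m j) 0 * d1 j k (xs m) y
  - xihat k xs y / lam.

End Defs.

(* Main.v *)
Require Import Defs.
From HB Require Import structures.
From mathcomp Require Import all_boot all_order all_algebra.
From mathcomp Require Import all_classical all_reals all_analysis.
From mathcomp Require Import lra ring.
Import Order.TTheory GRing.Theory Num.Theory.
Import numFieldNormedType.Exports.
Local Open Scope classical_set_scope.
Local Open Scope ring_scope.

Section Gen0.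
Context {R : realType} {V : normedModType R}.
Implicit Types (f : V -> R).

Lemma quot_shiftr f (x y v : V) :
  (fun h : R => h^-1 *: (((fun x' => f (x' - y)) \o shift x) (h *: v) - f (x - y)))
  = (fun h : R => h^-1 *: ((f \o shift (x - y)) (h *: v) - f (x - y))).
Proof. by apply: funext => h /=; rewrite addrA. Qed.

Lemma D_shiftr f (x y v : V) : 'D_v (fun x' => f (x' - y)) x = 'D_v f (x - y).
Proof. by rewrite /derive quot_shiftr. Qed.

Lemma dv_shiftr f (x y v : V) : derivable f (x - y) v -> derivable (fun x' => f (x' - y)) x v.
Proof. by rewrite /derivable quot_shiftr. Qed.

Lemma quot_negshift f (x y v : V) :
  (fun h : R => h^-1 *: (((fun y' => f (x - y')) \o shift y) (h *: v) - f (x - y)))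
  = (fun h : R => h^-1 *: ((f \o shift (x - y)) (h *: - v) - f (x - y))).
Proof. by apply: funext => h /=; rewrite scalerN opprD addrA addrAC addrC. Qed.

Lemma D_negshift f (x y v : V) : 'D_v (fun y' => f (x - y')) y = 'D_(- v) f (x - y).
Proof. by rewrite /derive quot_negshift. Qed.

Lemma dv_negshift f (x y v : V) : derivable f (x - y) (- v) -> derivable (fun y' => f (x - y')) y v.
Proof. by rewrite /derivable quot_negshift. Qed.

Lemma D_N f (z v : V) : differentiable f z -> 'D_(- v) f z = - 'D_v f z.
Proof. by move=> df; rewrite !deriveE // raddfN. Qed.

End Gen0.

Section Gen.
Context {R : realType} {V : normedModType R}.
Implicit Types (f : V -> R).

Lemma quot_line f (b w : V) (t : R) :
  (fun h : R => h^-1 *: (((fun s : R => f (b + s *: w)) \o shift t) (h *: 1) - f (b + t *: w)))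
  = (fun h : R => h^-1 *: ((f \o shift (b + t *: w)) (h *: w) - f (b + t *: w))).
Proof.
apply: funext => h /=; rewrite [h *: 1]mulr1 scalerDl addrCA; done.
Qed.

Lemma is_derive_line f (b w : V) (t : R) : derivable f (b + t *: w) w ->
  is_derive t 1 (fun s : R => f (b + s *: w)) ('D_w f (b + t *: w)).
Proof.
move=> df; apply: DeriveDef.
  by rewrite /derivable quot_line.
by rewrite /derive quot_line.
Qed.

Lemma mvt_line f (b w : V) (h : R) : 0 < h ->
  (forall t : R, derivable f (b + t *: w) w) ->
  exists2 t, t \in `]0, h[%R & f (b + h *: w) - f b = h * 'D_w f (b + t *: w).
Proof.
move=> h0 df.
have D t := @is_derive_line f b w t (df t).
have C : continuous (fun s : R => f (b + s *: w)).
  move=> t; apply: differentiable_continuous; apply/derivable1_diffP.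
  exact: (@ex_derive _ _ _ _ _ _ _ (D t)).
have W : {within `[0, h], continuous (fun s : R => f (b + s *: w))} by apply: continuous_subspaceT.
have [c c0h E] := MVT h0 (fun x _ => D x) W.
exists c => //; move: E; rewrite scale0r addr0 subr0 => ->; by rewrite mulrC.
Qed.


Lemma near_ex (P : V -> Prop) (a : V) : (\forall z \near a, P z) ->
  exists2 e : R, 0 < e & forall z, `|a - z| < e -> P z.
Proof.
move=> /nbhs_ballP [e e0 H]; exists e => // z az; apply: H.
by rewrite -ball_normE /=.
Qed.

Lemma box (g : V -> R) (a u v : V) (h : R) : 0 < h ->
  (forall z, derivable g z u) -> (forall z, derivable ('D_u g) z v) ->
  exists s t, [/\ s \in `]0, h[%R, t \in `]0, h[%R &
   (g (a + h *: u + h *: v) - g (a + h *: u)) - (g (a + h *: v) - g a)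
   = h * (h * 'D_v ('D_u g) (a + s *: u + t *: v))].
Proof.
move=> h0 du dvu.
pose F := (fun z => g (z - - (h *: v))) - g.
have dF z : derivable F z u by apply: derivableB => //; apply: dv_shiftr.
have DF z : 'D_u F z = 'D_u g (z - - (h *: v)) - 'D_u g z.
  by rewrite deriveB //; [rewrite D_shiftr | apply: dv_shiftr].
have [s s0h Es] := @mvt_line F a u h h0 (fun t => dF (a + t *: u)).
have [t t0h Et] := @mvt_line ('D_u g) (a + s *: u) v h h0 (fun t => dvu (a + s *: u + t *: v)).
exists s, t; split => //.
move: Es; rewrite DF opprK Et /F /= opprK => <-.
by [].
Qed.

Lemma box_near (a u v : V) (s t h d : R) : 0 < d ->
  h = d / (`|u| + `|v| + 1) -> s \in `]0, h[%R -> t \in `]0, h[%R ->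
  `|a - (a + s *: u + t *: v)| < d.
Proof.
move=> d0 hE; rewrite !in_itv /= => /andP[s0 sh] /andP[t0 th].
have pos : 0 < `|u| + `|v| + 1 by rewrite ltr_wpDl // addr_ge0.
have dE : d = h * (`|u| + `|v| + 1) by rewrite hE divfK // gt_eqF.
rewrite (_ : a - (a + s *: u + t *: v) = - (s *: u + t *: v)); last first.
  by rewrite -addrA opprD addrA subrr add0r.
rewrite normrN.
apply: (le_lt_trans (ler_normD _ _)); rewrite !normrZ !gtr0_norm //.
have hu : s * `|u| <= h * `|u| by rewrite ler_wpM2r // ltW.
have hv : t * `|v| <= h * `|v| by rewrite ler_wpM2r // ltW.
have h0 : 0 < h by apply: lt_trans sh.
rewrite dE; lra.
Qed.

Lemma schwarz (g : V -> R) (a u v : V) :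
 (forall z, derivable g z u) -> (forall z, derivable g z v) ->
 (forall z, derivable ('D_u g) z v) -> (forall z, derivable ('D_v g) z u) ->
 {for a, continuous ('D_v ('D_u g))} -> {for a, continuous ('D_u ('D_v g))} ->
 'D_v ('D_u g) a = 'D_u ('D_v g) a.
Proof.
move=> du dv duv dvu c1 c2.
set A := 'D_v ('D_u g) a; set B := 'D_u ('D_v g) a.
apply/eqP; rewrite -subr_eq0; apply/negP => /negP ne.
have e0 : 0 < `|A - B| / 2 by rewrite divr_gt0 // normr_gt0.
have [d1 d10 H1] := near_ex _ _ ((cvgrPdist_lt _ _).1 c1 _ e0).
have [d2 d20 H2] := near_ex _ _ ((cvgrPdist_lt _ _).1 c2 _ e0).
pose d := Num.min d1 d2.
have d0 : 0 < d by rewrite lt_min d10 d20.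
pose h := d / (`|u| + `|v| + 1).
have pos : 0 < `|u| + `|v| + 1 by rewrite ltr_wpDl // addr_ge0.
have h0 : 0 < h by rewrite divr_gt0.
have [s [t [s0 t0 E1]]] := @box g a u v h h0 du duv.
have [s' [t' [s0' t0' E2]]] := @box g a v u h h0 dv dvu.
have N1 := @box_near a u v s t h d d0 (erefl h) s0 t0.
have hE' : h = d / (`|v| + `|u| + 1) by rewrite /h [`|v| + _]addrC.
have N2 := @box_near a v u s' t' h d d0 hE' s0' t0'.
have W : 'D_v ('D_u g) (a + s *: u + t *: v) = 'D_u ('D_v g) (a + s' *: v + t' *: u).
  apply: (mulfI (lt0r_neq0 h0)); apply: (mulfI (lt0r_neq0 h0)).
  rewrite -E1 -E2 [a + h *: v + _]addrAC; lra.
have dd1 : d <= d1 by rewrite /d ge_min lexx.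
have dd2 : d <= d2 by rewrite /d ge_min lexx orbT.
have K1 := H1 _ (lt_le_trans N1 dd1).
have K2 := H2 _ (lt_le_trans N2 dd2).
rewrite W -/A -/B in K1 K2.
move: K1 K2; move: ('D_u ('D_v g) (a + s' *: v + t' *: u)) => w K1 K2.
clearbody A B.
have T := ler_normB (A - w) (B - w).
rewrite opprB addrA subrK in T.
have : `|A - B| < `|A - B|.
  apply: (le_lt_trans T); rewrite [X in _ < X]splitr.
  by rewrite ltrD.
by rewrite ltxx.
Qed.

End Gen.

Section W.
Context {R : realType} {V : normedModType R}.
Implicit Types (F G : V -> R) (x v : V).

Lemma D_opp F x v : derivable F x v -> 'D_v (fun z => - F z) x = - 'D_v F x.
Proof. by move=> dF; rewrite -deriveN. Qed.
Lemma dv_opp F x v : derivable F x v -> derivable (fun z => - F z) x v.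
Proof. by move=> dF; apply: derivableN. Qed.
Lemma D_sub F G x v : derivable F x v -> derivable G x v ->
  'D_v (fun z => F z - G z) x = 'D_v F x - 'D_v G x.
Proof. by move=> dF dG; rewrite -deriveB. Qed.
Lemma dv_sub F G x v : derivable F x v -> derivable G x v ->
  derivable (fun z => F z - G z) x v.
Proof. by move=> dF dG; apply: derivableB. Qed.
Lemma D_mulc F (c : R) x v : derivable F x v -> 'D_v (fun z => c * F z) x = c * 'D_v F x.
Proof. by move=> dF; rewrite -deriveMl. Qed.
Lemma dv_mulc F (c : R) x v : derivable F x v -> derivable (fun z => c * F z) x v.
Proof.
move=> dF; have := derivableM (derivable_cst c x v) dF.
by [].
Qed.
Lemma D_sumf n (F : 'I_n -> V -> R) x v : (forall i, derivable (F i) x v) ->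
  'D_v (fun z => \sum_(i < n) F i z) x = \sum_(i < n) 'D_v (F i) x.
Proof.
move=> dF; rewrite -derive_sum //.
have -> : (fun z => \sum_(i < n) F i z) = \sum_(i < n) F i.
  by apply: funext => z; rewrite fct_sumE.
by [].
Qed.
Lemma dv_sumf n (F : 'I_n -> V -> R) x v : (forall i, derivable (F i) x v) ->
  derivable (fun z => \sum_(i < n) F i z) x v.
Proof.
move=> dF; have -> : (fun z => \sum_(i < n) F i z) = \sum_(i < n) F i.
  by apply: funext => z; rewrite fct_sumE.
exact: derivable_sum.
Qed.
End W.

Section Phi.
Variables (R : realType) (d : nat) (phi : 'rV[R]_d -> R).
Hypothesis C : C3 phi.
Hypothesis ev : forall z, phi (- z) = phi z.
Local Notation V := 'rV[R]_d.

Lemma dif0 (i : 'I_d) z : differentiable phi z.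
Proof. by case: (C i i i z). Qed.
Lemma dif1 i z : differentiable (pd i phi) z.
Proof. by case: (C i i i z). Qed.
Lemma dif2 i j z : differentiable (pd i (pd j phi)) z.
Proof. by case: (C j i i z). Qed.
Lemma cont3 l i j z : {for z, continuous (pd l (pd i (pd j phi)))}.
Proof. by case: (C j i l z). Qed.

Lemma refl (f : V -> R) (v z : V) : differentiable f (- z) ->
  'D_v (fun w => f (- w)) z = - 'D_v f (- z).
Proof.
move=> df; have -> : (fun w => f (- w)) = (fun w => f (0 - w)).
  by apply: funext => w; rewrite sub0r.
by rewrite D_negshift sub0r D_N.
Qed.

Lemma dv_refl (f : V -> R) (v z : V) : differentiable f (- z) ->
  derivable (fun w => f (- w)) z v.
Proof.
move=> df; have -> : (fun w => f (- w)) = (fun w => f (0 - w)).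
  by apply: funext => w; rewrite sub0r.
by apply: dv_negshift; rewrite sub0r; apply: diff_derivable.
Qed.

Lemma odd_of_even (f : V -> R) (v : V) : (forall z, differentiable f z) ->
  (forall z, f (- z) = f z) -> forall z, 'D_v f (- z) = - 'D_v f z.
Proof.
move=> df e z.
have E : f = (fun w => f (- w)) by apply: funext => w; rewrite e.
by rewrite {2}E refl ?opprK.
Qed.

Lemma even_of_odd (f : V -> R) (v : V) : (forall z, differentiable f z) ->
  (forall z, f (- z) = - f z) -> forall z, 'D_v f (- z) = 'D_v f z.
Proof.
move=> df e z.
have E : f = (fun w => - f (- w)) by apply: funext => w; rewrite e opprK.
by rewrite {2}E D_opp ?refl ?opprK //; apply: dv_refl.
Qed.

Lemma ev1 j z : pd j phi (- z) = - pd j phi z.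
Proof. rewrite /pd; exact: (odd_of_even phi (evec R j) (fun w => dif0 j w) ev z). Qed.
Lemma ev2 i j z : pd i (pd j phi) (- z) = pd i (pd j phi) z.
Proof. rewrite /pd; exact: (even_of_odd (pd j phi) (evec R i) (fun w => dif1 j w) (ev1 j) z). Qed.
Lemma ev3 l i j z : pd l (pd i (pd j phi)) (- z) = - pd l (pd i (pd j phi)) z.
Proof. rewrite /pd; exact: (odd_of_even (pd i (pd j phi)) (evec R l) (fun w => dif2 i j w) (ev2 i j) z). Qed.

Lemma sw i j z : pd j (pd i (pd j phi)) z = pd i (pd j (pd j phi)) z.
Proof.
rewrite /pd; symmetry; apply: schwarz => w.
- exact/diff_derivable/dif1.
- exact/diff_derivable/dif1.
- exact/diff_derivable/(dif2 j j).
- exact/diff_derivable/(dif2 i j).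
- exact: (cont3 i j j).
- exact: (cont3 j i j).
Qed.

Local Notation k := (tkernel phi).

Lemma kd1 j x y : d1 j k x y = pd j phi (x - y).
Proof. by rewrite /d1 /tkernel /pd D_shiftr. Qed.

Lemma kd2 j x y : d2 j k x y = - pd j phi (x - y).
Proof. by rewrite /d2 /tkernel /pd D_negshift D_N //; apply: dif0 j _. Qed.

Lemma kd1d1 j x y : d1 j (d1 j k) x y = pd j (pd j phi) (x - y).
Proof.
rewrite {1}/d1 (_ : (fun x' => d1 j k x' y) = (fun x' => pd j phi (x' - y))); last first.
  by apply: funext => x'; rewrite kd1.
by rewrite {1}/pd D_shiftr.
Qed.

Lemma kd1d2 i j x y : d1 i (d2 j k) x y = - pd i (pd j phi) (x - y).
Proof.
rewrite {1}/d1 (_ : (fun x' => d2 j k x' y) = (fun x' => - pd j phi (x' - y))); last first.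
  by apply: funext => x'; rewrite kd2.
rewrite {1}/pd D_opp ?D_shiftr //.
by apply: dv_shiftr; apply/diff_derivable/dif1.
Qed.

Lemma kd2d2 j x y : d2 j (d2 j k) x y = pd j (pd j phi) (x - y).
Proof.
rewrite {1}/d2 (_ : (fun y' => d2 j k x y') = (fun y' => - pd j phi (x - y'))); last first.
  by apply: funext => y'; rewrite kd2.
rewrite {1}/pd D_opp ?D_negshift ?D_N ?opprK //; first exact: dif1.
by apply: dv_negshift; apply/diff_derivable/dif1.
Qed.

Lemma kd1d2d2 i j x y : d1 i (d2 j (d2 j k)) x y = pd i (pd j (pd j phi)) (x - y).
Proof.
rewrite {1}/d1 (_ : (fun x' => d2 j (d2 j k) x' y) = (fun x' => pd j (pd j phi) (x' - y))); last first.
  by apply: funext => x'; rewrite kd2d2.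
by rewrite {1}/pd D_shiftr.
Qed.

Lemma Kcf_entry (y x : V) i j : Kcf phi y x i j = - pd i (pd j phi) (x - y).
Proof. by rewrite /Kcf /hess !mxE -ev2 opprB. Qed.

Lemma zeta_term (y x0 : V) i j :
  pd j (fun x => Kcf phi y x i j) x0 = - pd i (pd j (pd j phi)) (x0 - y).
Proof.
rewrite (_ : (fun x => Kcf phi y x i j) = (fun x => - pd i (pd j phi) (y - x))); last first.
  by apply: funext => x; rewrite /Kcf /hess !mxE.
rewrite {1}/pd D_opp ?D_negshift ?D_N ?opprK; first last.
- by apply: dv_negshift; apply/diff_derivable/dif2.
- exact: dif2.
rewrite -[y - x0]opprB.
exact: (etrans (ev3 j i j (x0 - y)) (congr1 -%R (sw i j (x0 - y)))).
Qed.

End Phi.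

Section Phi2.
Variables (R : realType) (d : nat) (phi : 'rV[R]_d -> R).
Hypothesis C : C3 phi.
Hypothesis ev : forall z, phi (- z) = phi z.
Local Notation V := 'rV[R]_d.
Local Notation k := (tkernel phi).

Lemma grad_fhat (M : nat) (xs : 'I_M -> V) lam c y i :
  pd i (fhat k xs lam c) y =
  \sum_(m < M) \sum_(j < d) c (mxvec_index m j) 0 * (- pd i (pd j phi) (xs m - y))
  - lam^-1 * (M%:R^-1 * \sum_(m < M) \sum_(j < d) (- pd i (pd j (pd j phi)) (xs m - y))).
Proof.
have E : fhat k xs lam c = fun y =>
  (\sum_(m < M) \sum_(j < d) c (mxvec_index m j) 0 * pd j phi (xs m - y))
  - lam^-1 * (M%:R^-1 * \sum_(m < M) \sum_(j < d) pd j (pd j phi) (xs m - y)).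
  apply: funext => z; rewrite /fhat /xihat [_ / lam]mulrC.
  have E1 : \sum_(m < M) \sum_(j < d) c (mxvec_index m j) 0 * d1 j k (xs m) z = \sum_(m < M) \sum_(j < d) c (mxvec_index m j) 0 * pd j phi (xs m - z).
    by apply: eq_bigr => m _; apply: eq_bigr => j _; rewrite kd1.
  have E2 : \sum_(m < M) \sum_(j < d) d1 j (d1 j k) (xs m) z = \sum_(m < M) \sum_(j < d) pd j (pd j phi) (xs m - z).
    by apply: eq_bigr => m _; apply: eq_bigr => j _; rewrite kd1d1.
  exact: (congr2 (fun a b => a - lam^-1 * (M%:R^-1 * b)) E1 E2).
rewrite E {1}/pd D_sub; last first.
- apply: dv_mulc; apply: dv_mulc; apply: dv_sumf => m; apply: dv_sumf => j.
  by apply: dv_negshift; apply/diff_derivable/dif2.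
- apply: dv_sumf => m; apply: dv_sumf => j; apply: dv_mulc.
  by apply: dv_negshift; apply/diff_derivable/dif1.
rewrite D_mulc; last first.
  apply: dv_mulc; apply: dv_sumf => m; apply: dv_sumf => j.
  by apply: dv_negshift; apply/diff_derivable/dif2.
rewrite D_mulc; last first.
  apply: dv_sumf => m; apply: dv_sumf => j.
  by apply: dv_negshift; apply/diff_derivable/dif2.
rewrite D_sumf; last first.
  move=> m /=; apply: dv_sumf => j; apply: dv_mulc.
  by apply: dv_negshift; apply/diff_derivable/dif1.
rewrite D_sumf; last first.
  move=> m /=; apply: dv_sumf => j.
  by apply: dv_negshift; apply/diff_derivable/dif2.
congr (_ - _ * (_ * _)).
  apply: eq_bigr => m _; rewrite D_sumf; last first.
    move=> j /=; apply: dv_mulc.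
    by apply: dv_negshift; apply/diff_derivable/dif1.
  apply: eq_bigr => j _ /=; rewrite D_mulc; last first.
    by apply: dv_negshift; apply/diff_derivable/dif1.
  by rewrite D_negshift D_N //; apply: dif1.
apply: eq_bigr => m _; rewrite D_sumf; last first.
  by move=> j /=; apply: dv_negshift; apply/diff_derivable/dif2.
apply: eq_bigr => j _ /=.
by rewrite D_negshift D_N //; apply: dif2.
Qed.

End Phi2.

Lemma mxapp_evec (R : realType) d (A : 'M[R]_d) i j : (mxapp A (evec R j)) 0 i = A i j.
Proof. by rewrite /mxapp /evec -rowE !mxE. Qed.

Lemma reindex_mx (R : realType) M d (F : 'I_(M * d) -> R) :
  \sum_(q < M * d) F q = \sum_(m < M) \sum_(j < d) F (mxvec_index m j).
Proof.
rewrite pair_big /=.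
rewrite (reindex (uncurry (@mxvec_index M d))) /=.
  by apply: eq_bigr => -[m j] _.
exact: curry_mxvec_bij.
Qed.

Lemma decode_mx d M (m : 'I_M) (j : 'I_d) : Defs.decode (mxvec_index m j) = (m, j).
Proof. by rewrite /Defs.decode /mxvec_index cast_ordK enum_rankK. Qed.

Section Phi3.
Variables (R : realType) (d : nat) (phi : 'rV[R]_d -> R).
Hypothesis C : C3 phi.
Hypothesis ev : forall z, phi (- z) = phi z.
Local Notation V := 'rV[R]_d.
Local Notation k := (tkernel phi).
Variables (M : nat) (xs : 'I_M -> V) (lam : R) (c : 'cV[R]_(M * d)).

Definition Kc (y : V) : V :=
  \sum_(m < M) \sum_(j < d) c (mxvec_index m j) 0 *: mxapp (Kcf phi y (xs m)) (evec R j).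

Lemma zeta_entry (y : V) i : zetahat (Kcf phi) xs y 0 i =
  M%:R^-1 * \sum_(m < M) \sum_(j < d) (- pd i (pd j (pd j phi)) (xs m - y)).
Proof.
rewrite /zetahat mxE; congr (_ * _); apply: eq_bigr => m _; apply: eq_bigr => j _.
exact: zeta_term.
Qed.

Lemma Kc_entry (y : V) i : Kc y 0 i =
  \sum_(m < M) \sum_(j < d) c (mxvec_index m j) 0 * (- pd i (pd j phi) (xs m - y)).
Proof.
rewrite /Kc summxE; apply: eq_bigr => m _; rewrite summxE; apply: eq_bigr => j _.
by rewrite mxE mxapp_evec Kcf_entry.
Qed.

Lemma grad_eq (y : V) :
  grad (fhat k xs lam c) y = Kc y - lam^-1 *: zetahat (Kcf phi) xs y.
Proof.
apply/rowP => i.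
have -> : (Kc y - lam^-1 *: zetahat (Kcf phi) xs y) 0 i =
  Kc y 0 i - lam^-1 * zetahat (Kcf phi) xs y 0 i by rewrite !mxE.
by rewrite mxE grad_fhat // Kc_entry zeta_entry.
Qed.

Lemma data_eq
  (Esys : (Gmat k xs + (M%:R * lam)%:M) *m c = lam^-1 *: bvec k xs) l :
  Kc (xs l) - lam^-1 *: zetahat (Kcf phi) xs (xs l)
  = - (M%:R * lam) *: \row_j c (mxvec_index l j) 0.
Proof.
apply/rowP => i.
set p := mxvec_index l i.
have G1 : (Gmat k xs *m c) p 0 = Kc (xs l) 0 i.
  rewrite mxE reindex_mx Kc_entry; apply: eq_bigr => m _; apply: eq_bigr => j _.
  rewrite mxE !decode_mx /=.
  rewrite (kd1d2 _ _ _ C).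
  rewrite [_ * c _ _]mulrC.
  by rewrite -[xs l - xs m]opprB (ev2 _ _ _ C ev).
have B1 : bvec k xs p 0 = zetahat (Kcf phi) xs (xs l) 0 i.
  rewrite mxE decode_mx /= zeta_entry; congr (_ * _).
  apply: eq_bigr => m _; apply: eq_bigr => j _.
  rewrite (kd1d2d2 _ _ _ C) -[xs m - xs l]opprB (ev3 _ _ _ C ev); exact: (esym (opprK _)).
have E : Kc (xs l) 0 i + M%:R * lam * c p 0 = lam^-1 * zetahat (Kcf phi) xs (xs l) 0 i.
  rewrite -G1 -B1.
  have := congr1 (fun A : 'M[R]_(M * d, 1) => A p 0) Esys; rewrite /= mulmxDl mul_scalar_mx.
  by rewrite mxE [(_ *: c) _ _]mxE [(_ *: bvec _ _) _ _]mxE.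
have -> : (Kc (xs l) - lam^-1 *: zetahat (Kcf phi) xs (xs l)) 0 i =
  Kc (xs l) 0 i - lam^-1 * zetahat (Kcf phi) xs (xs l) 0 i by rewrite !mxE.
have -> : (- (M%:R * lam) *: \row_j c (mxvec_index l j) 0) 0 i = - (M%:R * lam * c p 0)
  by rewrite !mxE mulNr.
by rewrite -E opprD addrA subrr add0r.
Qed.

End Phi3.

Section RK.
Variables (R : realType) (d : nat) (T : Type) (K : T -> T -> 'M[R]_d).
Variables (H : set (T -> 'rV[R]_d)) (ip : (T -> 'rV[R]_d) -> (T -> 'rV[R]_d) -> R).
Hypothesis hr : is_vRKHS K H ip.
Local Notation V := 'rV[R]_d.

Lemma rk_add f g : H f -> H g -> H (fun y => f y + g y).
Proof. by case: hr => _ [Ha _] ; apply: Ha. Qed.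
Lemma rk_scal a f : H f -> H (fun y => a *: f y).
Proof. by case: hr => _ [_ [Hs _]]; apply: Hs. Qed.
Lemma rk_zero : H (fun _ => 0).
Proof. by case: hr. Qed.
Lemma rk_K x c : H (fun y => mxapp (K y x) c).
Proof. by case: hr => _ [_ [_ [_ [_ [_ [_ [_ [HK _]]]]]]]]; apply: HK. Qed.

Lemma rk_sum n (F : 'I_n -> T -> V) : (forall i, H (F i)) -> H (fun y => \sum_(i < n) F i y).
Proof.
elim: n F => [|n IH] F HF.
  rewrite (_ : (fun y => _) = (fun _ => 0)); first exact: rk_zero.
  by apply: funext => y; rewrite big_ord0.
rewrite (_ : (fun y => _) = (fun y => \sum_(i < n) F (widen_ord (leqnSn n) i) y + F ord_max y)).
  by apply: rk_add => //; apply: IH.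
by apply: funext => y; rewrite big_ord_recr.
Qed.

Lemma ip0 h : H h -> ip (fun _ => 0) h = 0.
Proof.
case: hr => _ [_ [_ [_ [Hl _]]]] Hh.
have := Hl 1 _ _ _ rk_zero rk_zero Hh.
rewrite (_ : (fun _ => 1 *: 0 + 0) = (fun _ => 0)); last by apply: funext => y; rewrite scaler0 addr0.
move/eqP; rewrite mul1r -subr_eq0 opprD addrA subrr sub0r oppr_eq0.
by move/eqP.
Qed.

Lemma ipZ a f h : H f -> H h -> ip (fun y => a *: f y) h = a * ip f h.
Proof.
case: hr => _ [_ [_ [_ [Hl _]]]] Hf Hh.
have := Hl a _ _ _ Hf rk_zero Hh.
rewrite (_ : (fun y => a *: f y + 0) = (fun y => a *: f y)); last by apply: funext => y; rewrite addr0.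
by rewrite ip0 // addr0.
Qed.

Lemma ipD f g h : H f -> H g -> H h -> ip (fun y => f y + g y) h = ip f h + ip g h.
Proof.
case: hr => _ [_ [_ [_ [Hl _]]]] Hf Hg Hh.
have := Hl 1 _ _ _ Hf Hg Hh.
rewrite (_ : (fun y => 1 *: f y + g y) = (fun y => f y + g y)); last by apply: funext => y; rewrite scale1r.
by rewrite mul1r.
Qed.

Lemma ipsum n (F : 'I_n -> T -> V) h : (forall i, H (F i)) -> H h ->
  ip (fun y => \sum_(i < n) F i y) h = \sum_(i < n) ip (F i) h.
Proof.
elim: n F => [|n IH] F HF Hh.
  rewrite (_ : (fun y => _) = (fun _ => 0)); last by apply: funext => y; rewrite big_ord0.
  by rewrite ip0 // big_ord0.
rewrite (_ : (fun y => _) = (fun y => \sum_(i < n) F (widen_ord (leqnSn n) i) y + F ord_max y)); last first.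
  by apply: funext => y; rewrite big_ord_recr.
rewrite ipD //; last by apply: rk_sum.
by rewrite IH // big_ord_recr.
Qed.

Lemma dotv_ge0 (u : V) : 0 <= dotv u u.
Proof.
rewrite /dotv mxE; apply: sumr_ge0 => j _.
by rewrite mxE -expr2 sqr_ge0.
Qed.

Lemma Lhat_pos M (xs : 'I_M -> T) h : H h -> 0 <= ip (Lhat K xs h) h.
Proof.
move=> Hh.
have HKt m : H (fun y => M%:R^-1 *: mxapp (K y (xs m)) (h (xs m))).
  by apply: rk_scal; apply: rk_K.
rewrite (_ : Lhat K xs h = (fun y => \sum_(m < M) M%:R^-1 *: mxapp (K y (xs m)) (h (xs m)))); last first.
  by apply: funext => y; rewrite /Lhat scaler_sumr.
rewrite ipsum //; apply: sumr_ge0 => m _.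
rewrite ipZ //; last by apply: rk_K.
case: hr => _ [_ [_ [Hsym [_ [_ [_ [_ [_ Hrep]]]]]]]].
rewrite Hsym //; last by apply: rk_K.
by rewrite Hrep // mulr_ge0 // ?invr_ge0 ?ler0n // dotv_ge0.
Qed.

Lemma Lhat_sub M (xs : 'I_M -> T) f g t :
  Lhat K xs (fun y => f y + (-1) *: g y) t = Lhat K xs f t - Lhat K xs g t.
Proof.
rewrite /Lhat -scalerBr -sumrB; congr (_ *: _); apply: eq_bigr => m _.
by rewrite /mxapp scaleN1r mulmxBl.
Qed.

Lemma rk_uniq M (xs : 'I_M -> T) (lam : R) f g : 0 < lam -> H f -> H g ->
  (forall t, Lhat K xs f t + lam *: f t = Lhat K xs g t + lam *: g t) -> f = g.
Proof.
move=> lam0 Hf Hg E.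
pose h := fun y => f y + (-1) *: g y.
have Hh : H h by apply: rk_add => //; apply: rk_scal.
have Eh t : Lhat K xs h t + lam *: h t = 0.
  rewrite Lhat_sub /h scalerDr scaleN1r scalerN.
  by rewrite addrACA -opprD E subrr.
have HL : H (Lhat K xs h).
  rewrite (_ : Lhat K xs h = (fun y => \sum_(m < M) M%:R^-1 *: mxapp (K y (xs m)) (h (xs m)))); last first.
    by apply: funext => y; rewrite /Lhat scaler_sumr.
  by apply: rk_sum => m; apply: rk_scal; apply: rk_K.
have Hlh : H (fun y => lam *: h y) by apply: rk_scal.
have I0 : ip (fun y => Lhat K xs h y + lam *: h y) h = 0.
  by rewrite (_ : (fun y => _) = (fun _ => 0)) ?ip0 //; apply: funext.
rewrite ipD // ipZ // in I0.
have P1 := @Lhat_pos M xs h Hh.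
have P2 : 0 <= ip h h by case: hr => _ [_ [_ [_ [_ [Hp _]]]]]; apply: Hp.
have Z : ip h h = 0.
  apply/eqP; rewrite eq_le P2 andbT.
  have : lam * ip h h <= 0 by rewrite -(addKr (ip (Lhat K xs h) h) (lam * _)) I0 addr0 oppr_le0.
  by rewrite pmulr_rle0.
have : h = (fun _ => 0) by case: hr => _ [_ [_ [_ [_ [_ [Hd _]]]]]]; apply: Hd.
move=> h0; apply: funext => t; have := congr1 (fun F => F t) h0.
by rewrite /h /= scaleN1r => /eqP; rewrite subr_eq0 => /eqP.
Qed.

End RK.

Lemma mxapp_scale (R : realType) d (A : 'M[R]_d) a (r : 'rV[R]_d) : mxapp A (a *: r) = a *: mxapp A r.
Proof. by rewrite /mxapp scalemxAl. Qed.

Lemma mxapp_row (R : realType) d (A : 'M[R]_d) (r : 'rV[R]_d) :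
  mxapp A r = \sum_(j < d) r 0 j *: mxapp A (evec R j).
Proof.
rewrite {1}(row_sum_delta r) /mxapp mulmx_suml; apply: eq_bigr => j _.
by rewrite scalemxAl.
Qed.

Section Phi4.
Variables (R : realType) (d : nat) (phi : 'rV[R]_d -> R).
Hypothesis C : C3 phi.
Hypothesis ev : forall z, phi (- z) = phi z.
Local Notation V := 'rV[R]_d.
Local Notation k := (tkernel phi).
Variables (M : nat) (xs : 'I_M -> V) (lam : R) (c : 'cV[R]_(M * d)).
Hypothesis lam0 : 0 < lam.
Hypothesis Esys : (Gmat k xs + (M%:R * lam)%:M) *m c = lam^-1 *: bvec k xs.

Lemma eq_main (y : V) :
  M%:R^-1 *: \sum_(l < M) mxapp (Kcf phi y (xs l))
      (Kc R d phi M xs c (xs l) - lam^-1 *: zetahat (Kcf phi) xs (xs l))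
  + lam *: (Kc R d phi M xs c y - lam^-1 *: zetahat (Kcf phi) xs y)
  = - zetahat (Kcf phi) xs y.
Proof.
have E1 : \sum_(l < M) mxapp (Kcf phi y (xs l))
      (Kc R d phi M xs c (xs l) - lam^-1 *: zetahat (Kcf phi) xs (xs l))
      = - (M%:R * lam) *: Kc R d phi M xs c y.
  rewrite /Kc scaler_sumr; apply: eq_bigr => l _.
  rewrite (data_eq _ _ _ C ev _ _ _ _ Esys) mxapp_scale mxapp_row; congr (_ *: _).
  by apply: eq_bigr => j _; rewrite mxE.
rewrite E1.
have HK : M%:R^-1 *: (- (M%:R * lam) *: Kc R d phi M xs c y) = - (lam *: Kc R d phi M xs c y).
  have [M0|M0] := eqVneq M 0%N.
    have -> : Kc R d phi M xs c y = 0.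
      rewrite /Kc big1 // => m _; exfalso; have := ltn_ord m; move: (nat_of_ord m) => n; by rewrite M0.
    by rewrite !scaler0 oppr0.
  by rewrite scalerA mulrN mulrA mulVf ?pnatr_eq0 // mul1r scaleNr.
rewrite HK scalerBr scalerA mulfV ?gt_eqF // scale1r.
by rewrite addKr.
Qed.

End Phi4.

Theorem mainTheorem11 (R : realType) (d M : nat) (X : set 'rV[R]_d)
    (phi : 'rV[R]_d -> R) (xs : 'I_M -> {x : 'rV[R]_d | X x}) (lam : R)
    (c : 'cV[R]_(M * d))
    (H : set ({x : 'rV[R]_d | X x} -> 'rV[R]_d))
    (ip : ({x : 'rV[R]_d | X x} -> 'rV[R]_d) ->
          ({x : 'rV[R]_d | X x} -> 'rV[R]_d) -> R) :
  open X ->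
  C3 phi ->
  pd_kernel (tkernel phi) ->
  0 < lam ->
  (* H is the RKHS of K_cf restricted to X *)
  is_vRKHS (fun s t : {x : 'rV[R]_d | X x} => Kcf phi (sval s) (sval t)) H ip ->
  (* zeta_hat (restricted to X) lies in H, so that (L + lam I)^{-1} zeta_hat makes sense *)
  H (fun t => zetahat (Kcf phi) (fun m => sval (xs m)) (sval t)) ->
  (* c solves (G + M lam I) c = b / lam *)
  (Gmat (tkernel phi) (fun m => sval (xs m)) + (M%:R * lam)%:M) *m c
    = lam^-1 *: bvec (tkernel phi) (fun m => sval (xs m)) ->
  exists s : {x : 'rV[R]_d | X x} -> 'rV[R]_d,
    [/\ H s,
        (* (L_Kcf + lam I) s = - zeta_hat *)
        (forall t, Lhat (fun u v => Kcf phi (sval u) (sval v)) xs s t + lam *: s t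
                   = - zetahat (Kcf phi) (fun m => sval (xs m)) (sval t)),
        (* s is the unique such element of H *)
        (forall s', H s' ->
           (forall t, Lhat (fun u v => Kcf phi (sval u) (sval v)) xs s' t + lam *: s' t
                      = - zetahat (Kcf phi) (fun m => sval (xs m)) (sval t)) ->
           s' = s) &
        (* and s = grad f_hat on X *)
        (forall t, s t = grad (fhat (tkernel phi) (fun m => sval (xs m)) lam c) (sval t))].
Proof.
move=> _ hC hpd lam0 hr hZ Esys.
have ev : forall z, phi (- z) = phi z.
  move=> z; have := hpd.1 z 0; rewrite /tkernel subr0 sub0r => ->; by [].
set xv := fun m => sval (xs m).
pose s := fun t : {x : 'rV[R]_d | X x} => grad (fhat (tkernel phi) xv lam c) (sval t).
have Es : s = fun t => Kc R d phi M xv c (sval t) + (- lam^-1) *: zetahat (Kcf phi) xv (sval t).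
  by apply: funext => t; rewrite /s (grad_eq _ _ _ hC ev) scaleNr.
have Hs : H s.
  rewrite Es; apply: (@rk_add _ _ _ _ _ _ hr (fun t => Kc R d phi M xv c (sval t)) (fun t => (- lam^-1) *: zetahat (Kcf phi) xv (sval t))); last by apply: (@rk_scal _ _ _ _ _ _ hr _ (fun t => zetahat (Kcf phi) xv (sval t))); exact: hZ.
  rewrite /Kc.
  apply: (@rk_sum _ _ _ _ _ _ hr M (fun m t => \sum_(j < d) c (mxvec_index m j) 0 *: mxapp (Kcf phi (sval t) (xv m)) (evec R j))) => m.
  apply: (@rk_sum _ _ _ _ _ _ hr d (fun j t => c (mxvec_index m j) 0 *: mxapp (Kcf phi (sval t) (xv m)) (evec R j))) => j.
  apply: (@rk_scal _ _ _ _ _ _ hr _ (fun t => mxapp (Kcf phi (sval t) (xv m)) (evec R j))).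
  exact (@rk_K _ _ _ _ _ _ hr (xs m) (evec R j)).
have Eq : forall t, Lhat (fun u v => Kcf phi (sval u) (sval v)) xs s t + lam *: s t
                   = - zetahat (Kcf phi) xv (sval t).
  move=> t; rewrite /Lhat /s /= !(grad_eq _ _ _ hC ev).
  under eq_bigr => m _ do rewrite (grad_eq _ _ _ hC ev).
  exact: (eq_main _ _ _ hC ev _ _ _ _ lam0 Esys).
exists s; split => //.
move=> s' Hs' Eq'.
apply: (@rk_uniq _ _ _ _ _ _ hr M xs lam _ _ lam0 Hs' Hs) => t.
by rewrite Eq' Eq.
Qed.
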